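(* Let $A$ and $G$ be selfadjoint operators in the Hilbert space $\mathcal H$. If $AG$ is bounded and everywhere defined, or $GA$ is bounded and everywhere defined, then either both $A$ and $G$ are bounded and everywhere defined, or the condition ''$\rho(AG)\neq\emptyset$ and $\rho(GA)\neq\emptyset$'' fails.
   Context: $(\mathcal H,(\cdot,\cdot))$ is a complex Hilbert space; $A,G$ are possibly unbounded selfadjoint operators; $AG$, $GA$ are the operator products with natural domains. For a linear operator $S$, $\rho(S)$ is the set of $\lambda\in\mathbb C$ such that $S-\lambda$ is injective, surjective and has a bounded everywhere defined inverse. *)

(* Defs.v *)
(* Unbounded operators are
   given by a domain predicate and a (total) function, only meaningful on
   the domain. *)
From Stdlib Require Import Reals.
Open Scope R_scope.

Record C := mkC { Re : R; Im : R }.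
Definition C0 : C := mkC 0 0.
Definition C1 : C := mkC 1 0.
Definition Cadd (a b : C) : C := mkC (Re a + Re b) (Im a + Im b).
Definition Cmul (a b : C) : C :=
  mkC (Re a * Re b - Im a * Im b) (Re a * Im b + Im a * Re b).
Definition Cconj (a : C) : C := mkC (Re a) (- Im a).

Record HilbertSpace := {
  hcar :> Type;
  hadd : hcar -> hcar -> hcar;
  hzero : hcar;
  hopp : hcar -> hcar;
  hscal : C -> hcar -> hcar;
  hinner : hcar -> hcar -> C;
  hadd_assoc : forall x y z, hadd x (hadd y z) = hadd (hadd x y) z;
  hadd_comm : forall x y, hadd x y = hadd y x;
  hadd_0 : forall x, hadd x hzero = x;
  hadd_opp : forall x, hadd x (hopp x) = hzero;
  hscal_1 : forall x, hscal C1 x = x;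
  hscal_assoc : forall a b x, hscal a (hscal b x) = hscal (Cmul a b) x;
  hscal_addv : forall a x y, hscal a (hadd x y) = hadd (hscal a x) (hscal a y);
  hscal_adds : forall a b x, hscal (Cadd a b) x = hadd (hscal a x) (hscal b x);
  hinner_add : forall x y z, hinner (hadd x y) z = Cadd (hinner x z) (hinner y z);
  hinner_scal : forall a x y, hinner (hscal a x) y = Cmul a (hinner x y);
  hinner_sym : forall x y, hinner y x = Cconj (hinner x y);
  hinner_pos : forall x, 0 <= Re (hinner x x);
  hinner_def : forall x, hinner x x = C0 -> x = hzero;
  hcomplete : forall u : nat -> hcar,
    (forall eps, 0 < eps -> exists N, forall m n, (N <= m)%nat -> (N <= n)%nat ->
       sqrt (Re (hinner (hadd (u m) (hopp (u n))) (hadd (u m) (hopp (u n))))) < eps) ->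
    exists l, forall eps, 0 < eps -> exists N, forall n, (N <= n)%nat ->
       sqrt (Re (hinner (hadd (u n) (hopp l)) (hadd (u n) (hopp l)))) < eps
}.

Arguments hadd {_}. Arguments hzero {_}. Arguments hopp {_}.
Arguments hscal {_}. Arguments hinner {_}.

Definition hsub {H : HilbertSpace} (x y : H) : H := hadd x (hopp y).
Definition hnorm {H : HilbertSpace} (x : H) : R := sqrt (Re (hinner x x)).

Record Op (H : HilbertSpace) := { dom : H -> Prop; app : H -> H }.
Arguments dom {_}. Arguments app {_}.

Definition is_linear {H : HilbertSpace} (T : Op H) : Prop :=
  dom T hzero /\
  (forall x y, dom T x -> dom T y -> dom T (hadd x y)) /\
  (forall a x, dom T x -> dom T (hscal a x)) /\
  (forall x y, dom T x -> dom T y -> app T (hadd x y) = hadd (app T x) (app T y)) /\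
  (forall a x, dom T x -> app T (hscal a x) = hscal a (app T x)).

Definition densely_defined {H : HilbertSpace} (T : Op H) : Prop :=
  forall x eps, 0 < eps -> exists y, dom T y /\ hnorm (hsub x y) < eps.

(* T = T^* : T densely defined linear, and the graph of T^*,
   {(y,z) | forall x in dom T, <T x, y> = <x, z>}, equals the graph of T. *)
Definition selfadjoint {H : HilbertSpace} (T : Op H) : Prop :=
  is_linear T /\ densely_defined T /\
  forall y z : H,
    (forall x, dom T x -> hinner (app T x) y = hinner x z) <->
    (dom T y /\ z = app T y).

Definition op_comp {H : HilbertSpace} (S T : Op H) : Op H :=
  {| dom := fun x => dom T x /\ dom S (app T x); app := fun x => app S (app T x) |}.

Definition everywhere_defined {H : HilbertSpace} (T : Op H) : Prop :=
  forall x, dom T x.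

Definition bounded {H : HilbertSpace} (T : Op H) : Prop :=
  exists M : R, forall x, dom T x -> hnorm (app T x) <= M * hnorm x.

Definition bounded_everywhere_defined {H : HilbertSpace} (T : Op H) : Prop :=
  everywhere_defined T /\ bounded T.

Definition op_shift {H : HilbertSpace} (T : Op H) (l : C) : Op H :=
  {| dom := dom T; app := fun x => hsub (app T x) (hscal l x) |}.

Definition in_resolvent {H : HilbertSpace} (T : Op H) (l : C) : Prop :=
  let S := op_shift T l in
  (forall x y, dom S x -> dom S y -> app S x = app S y -> x = y) /\
  (forall y, exists x, dom S x /\ app S x = y) /\
  exists Rinv : Op H,
    bounded_everywhere_defined Rinv /\
    (forall y, dom S (app Rinv y) /\ app S (app Rinv y) = y) /\
    (forall x, dom S x -> app Rinv (app S x) = x).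

Definition resolvent_nonempty {H : HilbertSpace} (T : Op H) : Prop :=
  exists l : C, in_resolvent T l.

(* Main.v *)
Require Import Defs.
From Stdlib Require Import Reals.
From Stdlib Require Import Lra Lia Arith Classical ClassicalEpsilon.
Open Scope R_scope.

Definition ip {H : HilbertSpace} (x y : H) : R := Re (hinner x y).
Definition rc (c : R) : Defs.C := mkC c 0.

Lemma ip_add_l {H : HilbertSpace} (x y z : H) : ip (hadd x y) z = ip x z + ip y z.
Proof. unfold ip. rewrite hinner_add. reflexivity. Qed.

Lemma ip_sym {H : HilbertSpace} (x y : H) : ip y x = ip x y.
Proof. unfold ip. rewrite hinner_sym. reflexivity. Qed.

Lemma ip_add_r {H : HilbertSpace} (x y z : H) : ip z (hadd x y) = ip z x + ip z y.
Proof. rewrite <- !(ip_sym z). apply ip_add_l. Qed.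

Lemma ip_scal_l {H : HilbertSpace} (c : R) (x y : H) : ip (hscal (rc c) x) y = c * ip x y.
Proof. unfold ip. rewrite hinner_scal. simpl. ring. Qed.

Lemma ip_scal_r {H : HilbertSpace} (c : R) (x y : H) : ip y (hscal (rc c) x) = c * ip y x.
Proof. rewrite <- !(ip_sym y). apply ip_scal_l. Qed.

Lemma hadd_0l {H : HilbertSpace} (x : H) : hadd hzero x = x.
Proof. rewrite hadd_comm. apply hadd_0. Qed.

Lemma cancel_self {H : HilbertSpace} (a : H) : hadd a a = a -> a = hzero.
Proof.
  intro E. rewrite <- (hadd_opp _ a). rewrite <- E at 2.
  rewrite <- hadd_assoc, hadd_opp, hadd_0. reflexivity.
Qed.

Lemma opp_unique {H : HilbertSpace} (a b : H) : hadd a b = hzero -> b = hopp a.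
Proof.
  intro E. rewrite <- (hadd_0 _ b), <- (hadd_opp _ a), hadd_assoc, (hadd_comm _ b a), E, hadd_0l.
  reflexivity.
Qed.

Lemma ip_zero_l {H : HilbertSpace} (z : H) : ip hzero z = 0.
Proof.
  assert (E : ip (hadd hzero hzero) z = ip hzero z) by now rewrite hadd_0.
  rewrite ip_add_l in E. lra.
Qed.

Lemma ip_zero_r {H : HilbertSpace} (z : H) : ip z hzero = 0.
Proof. rewrite ip_sym. apply ip_zero_l. Qed.

Lemma ip_opp_l {H : HilbertSpace} (x z : H) : ip (hopp x) z = - ip x z.
Proof.
  assert (E : ip (hadd x (hopp x)) z = 0) by now rewrite hadd_opp, ip_zero_l.
  rewrite ip_add_l in E. lra.
Qed.

Lemma ip_opp_r {H : HilbertSpace} (x z : H) : ip z (hopp x) = - ip z x.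
Proof. rewrite <- !(ip_sym z). apply ip_opp_l. Qed.

Lemma ip_pos {H : HilbertSpace} (x : H) : 0 <= ip x x.
Proof. apply hinner_pos. Qed.

Lemma ip_def {H : HilbertSpace} (x : H) : ip x x = 0 -> x = hzero.
Proof.
  intro E. apply hinner_def. unfold ip in E.
  pose proof (hinner_sym _ x x) as S.
  destruct (hinner x x) as [a b]. simpl in *. unfold Cconj in S. simpl in S.
  injection S. intro Hb. unfold C0. f_equal; lra.
Qed.

Lemma nrm_eq {H : HilbertSpace} (x : H) : hnorm x = sqrt (ip x x).
Proof. reflexivity. Qed.

Lemma nrm_pos {H : HilbertSpace} (x : H) : 0 <= hnorm x.
Proof. apply sqrt_pos. Qed.

Lemma nrm_sq {H : HilbertSpace} (x : H) : hnorm x * hnorm x = ip x x.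
Proof. unfold hnorm. apply sqrt_sqrt. apply ip_pos. Qed.

Lemma nrm_zero_eq {H : HilbertSpace} (x : H) : hnorm x = 0 -> x = hzero.
Proof. intro E. apply ip_def. rewrite <- nrm_sq, E. ring. Qed.

Lemma nrm_zero {H : HilbertSpace} : hnorm (@hzero H) = 0.
Proof. unfold hnorm. fold (ip (@hzero H) hzero). rewrite ip_zero_l. apply sqrt_0. Qed.

Lemma CS {H : HilbertSpace} (x y : H) : (ip x y) * (ip x y) <= ip x x * ip y y.
Proof.
  destruct (Req_dec (ip y y) 0) as [E|E].
  - apply ip_def in E. subst y. rewrite !ip_zero_r. pose proof (ip_pos x). nra.
  - pose proof (ip_pos y) as Py. pose proof (ip_pos x) as Px.
    set (t := - ip x y / ip y y).
    pose proof (ip_pos (hadd x (hscal (rc t) y))) as P.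
    rewrite !ip_add_l, !ip_add_r, !ip_scal_l, !ip_scal_r, (ip_sym x y) in P.
    assert (Q : 0 <= ip x x * ip y y - ip x y * ip x y).
    { replace (ip x x * ip y y - ip x y * ip x y) with
        (ip y y * (ip x x + t * ip x y + (t * ip x y + t * (t * ip y y)))).
      - apply Rmult_le_pos; lra.
      - unfold t. field. exact E. }
    lra.
Qed.

Lemma CS_abs {H : HilbertSpace} (x y : H) : Rabs (ip x y) <= hnorm x * hnorm y.
Proof.
  pose proof (CS x y) as C. rewrite <- !nrm_sq in C.
  pose proof (nrm_pos x). pose proof (nrm_pos y).
  assert (0 <= hnorm x * hnorm y) by (apply Rmult_le_pos; auto).
  apply Rabs_le; split; nra.
Qed.

Lemma nrm_tri {H : HilbertSpace} (x y : H) : hnorm (hadd x y) <= hnorm x + hnorm y.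
Proof.
  pose proof (CS_abs x y) as C. pose proof (Rle_abs (ip x y)).
  pose proof (nrm_pos x). pose proof (nrm_pos y). pose proof (nrm_pos (hadd x y)).
  pose proof (nrm_sq (hadd x y)) as E.
  rewrite ip_add_l, !ip_add_r, (ip_sym x y), <- (nrm_sq x), <- (nrm_sq y) in E.
  nra.
Qed.

Lemma nrm_scal {H : HilbertSpace} (c : R) (x : H) : hnorm (hscal (rc c) x) = Rabs c * hnorm x.
Proof.
  unfold hnorm. fold (ip (hscal (rc c) x) (hscal (rc c) x)). fold (ip x x).
  rewrite ip_scal_l, ip_scal_r, <- Rmult_assoc, sqrt_mult_alt.
  - f_equal. rewrite <- Rsqr_def. apply sqrt_Rsqr_abs.
  - pose proof (Rle_0_sqr c). unfold Rsqr in *. lra.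
Qed.

Lemma nrm_opp {H : HilbertSpace} (x : H) : hnorm (hopp x) = hnorm x.
Proof.
  unfold hnorm. fold (ip (hopp x) (hopp x)). fold (ip x x).
  rewrite ip_opp_l, ip_opp_r. f_equal. ring.
Qed.

Lemma opp_sub {H : HilbertSpace} (a b : H) : hopp (hadd a (hopp b)) = hadd b (hopp a).
Proof.
  symmetry. apply opp_unique.
  rewrite <- hadd_assoc, (hadd_assoc _ (hopp b) b), (hadd_comm _ (hopp b) b), hadd_opp, hadd_0l.
  apply hadd_opp.
Qed.

Lemma nrm_sub_sym {H : HilbertSpace} (a b : H) :
  hnorm (hadd a (hopp b)) = hnorm (hadd b (hopp a)).
Proof. rewrite <- opp_sub, nrm_opp. reflexivity. Qed.

Lemma sub_tri {H : HilbertSpace} (a b c : H) :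
  hnorm (hadd a (hopp c)) <= hnorm (hadd a (hopp b)) + hnorm (hadd b (hopp c)).
Proof.
  replace (hadd a (hopp c)) with (hadd (hadd a (hopp b)) (hadd b (hopp c))).
  - apply nrm_tri.
  - rewrite <- hadd_assoc, (hadd_assoc _ (hopp b) b), (hadd_comm _ (hopp b) b), hadd_opp, hadd_0l.
    reflexivity.
Qed.

Definition r3 (n : nat) : R := (/3)^n.
Definition sgn (a : R) : R := if Rle_dec 0 a then 1 else -1.

Fixpoint xs {H : HilbertSpace} (w : nat -> H) (n : nat) : H :=
  match n with
  | O => hzero
  | S k => hadd (xs w k) (hscal (rc (sgn (ip (xs w k) (w k)) * (r3 k / hnorm (w k)))) (w k))
  end.

Lemma r3_pos n : 0 < r3 n.
Proof. unfold r3. apply pow_lt. lra. Qed.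

Lemma r3_S n : r3 (S n) = r3 n / 3.
Proof. unfold r3. simpl. field. Qed.

Lemma sgn_abs a : Rabs (sgn a) = 1.
Proof. unfold sgn. destruct Rle_dec; [apply Rabs_R1|]. rewrite Rabs_left; lra. Qed.

Lemma step_norm {H : HilbertSpace} (w : nat -> H) k :
  0 < hnorm (w k) ->
  hnorm (hadd (xs w (S k)) (hopp (xs w k))) = r3 k.
Proof.
  intro P. simpl.
  rewrite (hadd_comm _ (xs w k)), <- hadd_assoc, hadd_opp, hadd_0.
  rewrite nrm_scal, Rabs_mult, sgn_abs, Rabs_right.
  - field. lra.
  - pose proof (r3_pos k). apply Rle_ge, Rlt_le. apply Rdiv_lt_0_compat; lra.
Qed.

Lemma key {H : HilbertSpace} (w : nat -> H) k :
  0 < hnorm (w k) -> r3 k * hnorm (w k) <= Rabs (ip (xs w (S k)) (w k)).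
Proof.
  intro P. simpl. rewrite ip_add_l, ip_scal_l, <- nrm_sq.
  pose proof (r3_pos k).
  replace (sgn (ip (xs w k) (w k)) * (r3 k / hnorm (w k)) * (hnorm (w k) * hnorm (w k)))
    with (sgn (ip (xs w k) (w k)) * (r3 k * hnorm (w k))) by (field; lra).
  assert (0 < r3 k * hnorm (w k)) by (apply Rmult_lt_0_compat; lra).
  unfold sgn. destruct Rle_dec.
  - rewrite Rabs_right; lra.
  - rewrite Rabs_left; lra.
Qed.

Lemma diff {H : HilbertSpace} (w : nat -> H) :
  (forall k, 0 < hnorm (w k)) ->
  forall n m, (n <= m)%nat ->
  hnorm (hadd (xs w m) (hopp (xs w n))) <= 3/2 * (r3 n - r3 m).
Proof.
  intros P n m Hnm. induction Hnm as [|m Hnm IH].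
  - rewrite hadd_opp, nrm_zero. lra.
  - eapply Rle_trans. apply (sub_tri _ (xs w m)).
    rewrite step_norm by apply P. rewrite r3_S. lra.
Qed.

Lemma r3_mono m n : (m <= n)%nat -> r3 n <= r3 m.
Proof.
  induction 1. lra. rewrite r3_S. pose proof (r3_pos m0). lra.
Qed.

Lemma le_eps (a b : R) : (forall eps, 0 < eps -> a < b + eps) -> a <= b.
Proof.
  intro K. destruct (Rle_lt_dec a b) as [h|h]; auto.
  specialize (K ((a - b)/2)). lra.
Qed.

Lemma hump {H : HilbertSpace} (w : nat -> H) :
  (forall k, 0 < hnorm (w k)) ->
  exists l : H, forall k, r3 k * hnorm (w k) / 2 <= Rabs (ip l (w k)).
Proof.
  intro P.
  assert (Dn : forall N n m, (N <= n)%nat -> (N <= m)%nat ->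
     hnorm (hadd (xs w m) (hopp (xs w n))) <= 3/2 * r3 N).
  { intros N n m h1 h2. destruct (le_lt_dec n m) as [h|h].
    - pose proof (diff w P n m h). pose proof (r3_pos m).
      pose proof (r3_mono N n h1). lra.
    - rewrite nrm_sub_sym. pose proof (diff w P m n ltac:(lia)).
      pose proof (r3_pos n). pose proof (r3_mono N m h2). lra. }
  destruct (hcomplete H (xs w)) as [l Hl].
  - intros eps Heps.
    destruct (pow_lt_1_zero (/3) ltac:(rewrite Rabs_right; lra) (eps * 2/3)
      ltac:(lra)) as [N HN].
    exists N. intros m n Hm Hn.
    pose proof (HN N (le_n N)) as Q. rewrite Rabs_right in Q.
    2:{ apply Rle_ge, pow_le. lra. }
    pose proof (Dn N n m Hn Hm). unfold r3 in *. unfold hnorm in *. unfold ip in *. lra.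
  - exists l. intro k.
    assert (B : hnorm (hadd (xs w (S k)) (hopp l)) <= 3/2 * r3 (S k)).
    { apply le_eps. intros eps Heps.
      destruct (Hl eps Heps) as [N HN].
      pose proof (HN (max N (S k)) ltac:(lia)) as Q.
      pose proof (sub_tri (xs w (S k)) (xs w (max N (S k))) l).
      rewrite (nrm_sub_sym (xs w (S k)) (xs w (max N (S k)))) in H0. pose proof (Dn (S k) (S k) (max N (S k)) (le_n _) ltac:(lia)).
      unfold hnorm, ip in *. lra. }
    rewrite r3_S in B.
    pose proof (key w k (P k)) as K.
    pose proof (CS_abs (hadd (xs w (S k)) (hopp l)) (w k)) as C.
    rewrite ip_add_l, ip_opp_l in C.
    pose proof (Rabs_triang_inv (ip (xs w (S k)) (w k)) (ip (xs w (S k)) (w k) + - ip l (w k))) as T.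
    replace (ip (xs w (S k)) (w k) - (ip (xs w (S k)) (w k) + - ip l (w k))) with (ip l (w k)) in T by ring.
    pose proof (P k). pose proof (r3_pos k).
    assert (hnorm (hadd (xs w (S k)) (hopp l)) * hnorm (w k) <= 3/2 * (r3 k / 3) * hnorm (w k))
      by (apply Rmult_le_compat_r; lra).
    lra.
Qed.

Lemma HT {H : HilbertSpace} (T : Op H) :
  selfadjoint T -> everywhere_defined T -> Defs.bounded T.
Proof.
  intros [Lin [_ SA]] ED.
  assert (Sym : forall x y, hinner (app T x) y = hinner x (app T y)).
  { intros x y. apply (proj2 (SA y (app T y))). split; [apply ED|reflexivity]. apply ED. }
  assert (T0 : app T hzero = hzero).
  { destruct Lin as [D0 [_ [_ [Ladd _]]]]. apply cancel_self.
    rewrite <- Ladd by exact D0. rewrite hadd_0. reflexivity. }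
  apply NNPP. intro NB.
  set (K := fun n : nat => 2 * INR n / r3 n).
  assert (E : forall n, exists y, K n * hnorm y < hnorm (app T y)).
  { intro n. apply NNPP. intro NE. apply NB. exists (K n). intros x _.
    apply Rnot_lt_le. intro h. apply NE. exists x. exact h. }
  set (y := fun n => proj1_sig (constructive_indefinite_description _ (E n))).
  assert (Hy : forall n, K n * hnorm (y n) < hnorm (app T (y n))).
  { intro n. unfold y. destruct constructive_indefinite_description as [v Hv]. exact Hv. }
  assert (Kpos : forall n, 0 <= K n).
  { intro n. unfold K. pose proof (r3_pos n). pose proof (pos_INR n).
    apply Rle_mult_inv_pos; lra. }
  assert (Ny : forall n, 0 < hnorm (y n)).
  { intro n. destruct (nrm_pos (y n)) as [h|h]; auto.
    symmetry in h. apply nrm_zero_eq in h. pose proof (Hy n) as Q.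
    rewrite h, T0, nrm_zero in Q. lra. }
  assert (Nw : forall n, 0 < hnorm (app T (y n))).
  { intro n. pose proof (Hy n). pose proof (Kpos n). pose proof (Ny n).
    pose proof (Rmult_le_pos _ _ (Kpos n) (Rlt_le _ _ (Ny n))). lra. }
  destruct (hump (fun n => app T (y n)) Nw) as [l Hl].
  destruct (INR_unbounded (hnorm (app T l))) as [n Hn].
  pose proof (Hl n) as Q. simpl in Q.
  assert (Ei : ip l (app T (y n)) = ip (app T l) (y n)) by (unfold ip; rewrite Sym; reflexivity).
  rewrite Ei in Q.
  pose proof (CS_abs (app T l) (y n)) as C.
  pose proof (Hy n) as Y. pose proof (r3_pos n) as R3. pose proof (Ny n).
  assert (r3 n * (K n * hnorm (y n)) / 2 = INR n * hnorm (y n)) by (unfold K; field; lra).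
  assert (r3 n * (K n * hnorm (y n)) < r3 n * hnorm (app T (y n)))
    by (apply Rmult_lt_compat_l; lra).
  assert (INR n * hnorm (y n) < hnorm (app T l) * hnorm (y n)) by lra.
  apply Rmult_lt_reg_r in H3; lra.
Qed.

Lemma scal0 {H : HilbertSpace} (v : H) : hscal (mkC 0 0) v = hzero.
Proof.
  apply cancel_self. rewrite <- hscal_adds. unfold Cadd. simpl.
  rewrite Rplus_0_r. reflexivity.
Qed.

Lemma opp_scal {H : HilbertSpace} (v : H) : hopp v = hscal (rc (-1)) v.
Proof.
  symmetry. apply opp_unique. rewrite <- (hscal_1 _ v) at 1.
  rewrite <- hscal_adds. unfold Cadd, C1, rc. simpl.
  replace (1 + -1) with 0 by ring. rewrite Rplus_0_r. apply scal0.
Qed.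

Lemma case1 {H : HilbertSpace} (A G : Op H) :
  selfadjoint A -> selfadjoint G -> everywhere_defined (op_comp A G) ->
  resolvent_nonempty (op_comp G A) ->
  bounded_everywhere_defined A /\ bounded_everywhere_defined G.
Proof.
  intros SA SG ED [l [_ [Surj _]]].
  assert (EG : everywhere_defined G) by (intro x; apply (ED x)).
  assert (EA : everywhere_defined A).
  { intro y. destruct (Surj y) as [x [[Dx DAx] Ex]]. simpl in Ex. rewrite <- Ex.
    destruct SA as [[_ [Dadd [Dsc _]]] _].
    unfold hsub. apply Dadd.
    - apply (ED (app A x)).
    - rewrite opp_scal. apply Dsc, Dsc, Dx. }
  split; split; auto; apply HT; auto.
Qed.

Theorem mainTheorem4 (H : HilbertSpace) (A G : Op H) :
  selfadjoint A -> selfadjoint G ->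
  (bounded_everywhere_defined (op_comp A G) \/
   bounded_everywhere_defined (op_comp G A)) ->
  (bounded_everywhere_defined A /\ bounded_everywhere_defined G) \/
  ~ (resolvent_nonempty (op_comp A G) /\ resolvent_nonempty (op_comp G A)).
Proof.
  intros SA SG [[ED _]|[ED _]].
  - destruct (classic (resolvent_nonempty (op_comp G A))) as [R|R].
    + left. apply case1; auto.
    + right. tauto.
  - destruct (classic (resolvent_nonempty (op_comp A G))) as [R|R].
    + left. destruct (case1 G A SG SA ED R). auto.
    + right. tauto.
Qed.
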